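(* Assume $A$ contains at least one prime element and that $U(A)$ is finite. Then for every $x\in A\setminus(U(A)\cup\{0\})$ such that $\mathcal D(x)$ is finite, there exist a prime element $p$ of $A$, an integer $n\ge1$ and $a\in A\setminus\{0\}$ such that $x=ap^n$ and $\gcd(a,p)=1$ (i.e. $p\nmid a$).
   Context: Let $\mathbb F$ be a subfield of $\mathbb C$ with a norm (absolute value) $\|\cdot\|_{\mathbb F}$, and $A$ a subring of $\mathbb F$ containing $1$ (hence an integral domain). $U(A)$ is the unit group of $A$; $d\mid x$ means $x=dc$ for some $c\in A$; $\mathcal D(x)=\{d\in A:d\mid x\}$; $xU(A)=\{xu:u\in U(A)\}$. $N:A\to\mathbb F\cap\mathbb R$ is a map with $N(a)\neq0$ for all nonzero $a\in A$ and satisfying: for all $x\in A$, $N(x)\in A$, $\mathcal D(N(x))=\mathcal D(x)$ and $N(N(x))=N(x)$; for all $x,y\in A$ there is $z\in A$ with $N(x)+N(y)=N(z)$; $N(-x)=N(x)$; $N(xy)=N(x)N(y)$; $\|N(x)\|_{\mathbb F}=N(x)$; for every $x\ne0$ there is $x'\in\mathbb F\cap\mathbb R$ with $N(x)^2=xx'\in A$. An element $p\in A$ is irreducible if $p\notin U(A)\cup\{0\}$ and $\mathcal D(p)=U(A)\cup pU(A)$; it is prime if it is irreducible and $N(p)=p$. For a prime $p$ and $a\in A$, $\gcd(a,p)=1$ means $p\nmid a$. *)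

(* Defs.v *)
(* The ambient field C is an arbitrary numClosedFieldType
   (the complex numbers are one). *)
From HB Require Import structures.
From mathcomp Require Import all_boot all_order all_algebra.
Set Implicit Arguments. Unset Strict Implicit. Unset Printing Implicit Defensive.
Import Order.TTheory GRing.Theory Num.Theory.
Local Open Scope ring_scope.

Section Defs.
Variable C : numClosedFieldType.

Definition is_subfield (F : pred C) : Prop :=
  0 \in F /\ 1 \in F /\
  (forall x y, x \in F -> y \in F -> x + y \in F) /\
  (forall x, x \in F -> - x \in F) /\
  (forall x y, x \in F -> y \in F -> x * y \in F) /\
  (forall x, x \in F -> x != 0 -> x^-1 \in F).

Definition is_abs_value (F : pred C) (nrm : C -> C) : Prop :=
  (forall x, x \in F -> 0 <= nrm x) /\
  (forall x, x \in F -> (nrm x == 0) = (x == 0)) /\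
  (forall x y, x \in F -> y \in F -> nrm (x * y) = nrm x * nrm y) /\
  (forall x y, x \in F -> y \in F -> nrm (x + y) <= nrm x + nrm y).

Definition is_subring_of (F A : pred C) : Prop :=
  (forall x, x \in A -> x \in F) /\ 0 \in A /\ 1 \in A /\
  (forall x y, x \in A -> y \in A -> x + y \in A) /\
  (forall x, x \in A -> - x \in A) /\
  (forall x y, x \in A -> y \in A -> x * y \in A).

Definition unitA (A : pred C) (u : C) : Prop :=
  u \in A /\ exists v, v \in A /\ u * v = 1.

Definition dvdA (A : pred C) (d x : C) : Prop :=
  exists c, c \in A /\ x = d * c.

Definition finite_set (P : C -> Prop) : Prop :=
  exists s : seq C, forall d, P d -> d \in s.

Definition divisorsA (A : pred C) (x : C) : C -> Prop :=
  fun d => d \in A /\ dvdA A d x.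

Definition irreducibleA (A : pred C) (p : C) : Prop :=
  p \in A /\ ~ unitA A p /\ p <> 0 /\
  (forall d, divisorsA A p d <-> (unitA A d \/ exists u, unitA A u /\ d = p * u)).

Definition primeA (A : pred C) (N : C -> C) (p : C) : Prop :=
  irreducibleA A p /\ N p = p.

Definition is_N (F A : pred C) (nrm N : C -> C) : Prop :=
  (forall x, x \in A -> N x \in F /\ N x \is Num.real) /\
  (forall x, x \in A -> x != 0 -> N x != 0) /\
  (forall x, x \in A -> N x \in A) /\
  (forall x, x \in A -> forall d, divisorsA A (N x) d <-> divisorsA A x d) /\
  (forall x, x \in A -> N (N x) = N x) /\
  (forall x y, x \in A -> y \in A -> exists z, z \in A /\ N x + N y = N z) /\
  (forall x, x \in A -> N (- x) = N x) /\
  (forall x y, x \in A -> y \in A -> N (x * y) = N x * N y) /\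
  (forall x, x \in A -> nrm (N x) = N x) /\
  (forall x, x \in A -> x != 0 ->
     exists x', x' \in F /\ x' \is Num.real /\ N x ^+ 2 = x * x' /\ x * x' \in A).

Definition setting (F : pred C) (nrm : C -> C) (A : pred C) (N : C -> C) : Prop :=
  is_subfield F /\ is_abs_value F nrm /\ is_subring_of F A /\ is_N F A nrm N.

End Defs.

(* Main.v *)
Require Import Defs.
From HB Require Import structures.
From mathcomp Require Import all_boot all_order all_algebra.
From Stdlib Require Import Classical.
From mathcomp Require Import zify.
Import Order.TTheory GRing.Theory Num.Theory.
Local Open Scope ring_scope.

Lemma dvdA_trans {C : numClosedFieldType} {A : pred C} {a b c : C} :
  (forall x y, x \in A -> y \in A -> x * y \in A) ->
  dvdA A a b -> dvdA A b c -> dvdA A a c.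
Proof.
move=> hm [c1 [h1 ->]] [c2 [h2 ->]]; exists (c1 * c2); split; first exact: hm.
by rewrite mulrA.
Qed.

Lemma exists_irr {C : numClosedFieldType} {A : pred C} :
  (forall x y, x \in A -> y \in A -> x * y \in A) -> 1 \in A ->
  forall n d (l : seq C), d \in A -> ~ unitA A d -> d <> 0 ->
  (forall e, divisorsA A d e -> e \in l) -> (size l <= n)%N ->
  exists q, irreducibleA A q /\ dvdA A q d.
Proof.
move=> hm h1; elim=> [|n IH] d l dA dnu dn0 hl hs.
  have : d \in l by apply: hl; split=> //; exists 1; rewrite mulr1.
  by case: l hl hs.
have dl : d \in l by apply: hl; split=> //; exists 1; rewrite mulr1.
case: (classic (forall e, divisorsA A d e ->
         unitA A e \/ exists u, unitA A u /\ e = d * u)) => H.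
  exists d; split; last by exists 1; rewrite mulr1.
  split=> //; split=> //; split=> // e; split; first exact: H.
  case=> [[eA [v [vA ev]]]|[u [[uA [v [vA uv]]] ->]]].
    split=> //; exists (v * d); split; first exact: hm.
    by rewrite mulrA ev mul1r.
  split; first exact: hm.
  by exists v; split=> //; rewrite -mulrA uv mulr1.
have [e He] := not_all_ex_not _ _ H.
have [De He2] := imply_to_and _ _ He.
have [enu ena] := not_or_and _ _ He2.
case: (De) => eA [c [cA dec]].
have en0 : e <> 0 by move=> e0; apply: dn0; rewrite dec e0 mul0r.
have Hl : forall f, divisorsA A e f -> f \in filter (predC (pred1 d)) l.
  move=> f [fA fe]; rewrite mem_filter; apply/andP; split; last first.
    apply: hl; split=> //; apply: (dvdA_trans hm fe); by exists c.
  apply/negP=> /= /eqP fd; subst f.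
  case: fe => c' [c'A ec'].
  apply: ena; exists c'; split=> //; split=> //; exists c; split=> //.
  apply: (mulfI (x:=d)); first exact/eqP.
  by rewrite mulr1 mulrA -ec' -dec.
have Hs : (size (filter (predC (pred1 d)) l) <= n)%N.
  rewrite size_filter; move: hs; rewrite -(count_predC (pred1 d) l).
  have : (0 < count (pred1 d) l)%N by rewrite -has_count; apply/hasP; exists d => //=.
  rewrite addnC; lia.
have [q [qi qe]] := IH e _ eA enu en0 Hl Hs.
by exists q; split=> //; apply: (dvdA_trans hm qe); exists c.
Qed.

Theorem corollary5p4 (C : numClosedFieldType) (F : pred C) (nrm : C -> C)
    (A : pred C) (N : C -> C) :
  setting F nrm A N ->
  (exists p, primeA A N p) ->
  finite_set (unitA A) ->
  forall x : C, x \in A -> ~ unitA A x -> x <> 0 ->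
    finite_set (divisorsA A x) ->
    exists p (n : nat) a,
      primeA A N p /\ (1 <= n)%N /\ a \in A /\ a <> 0 /\
      x = a * p ^+ n /\ ~ dvdA A p a.
Proof.
move=> [_ [_ [[_ [h0 [h1 [_ [_ hm]]]]] [_ [hN0 [hNA [hND [hNN _]]]]]]]] _ _.
move=> x xA xnu xn0 [l hl].
have [q [[qA [qnu [qn0 qirr]]] qx]] :=
  exists_irr hm h1 (size l) x l xA xnu xn0 hl (leqnn _).
set p := N q.
have pA : p \in A by apply: hNA.
have pn0 : p <> 0 by apply/eqP; apply: hN0 => //; exact/eqP.
have [u [uA pu]] : dvdA A q p.
  by have [_ ] := (hND q qA q).2 (conj qA (ex_intro _ 1 (conj h1 (esym (mulr1 q))))).
have [v [vA qv]] : dvdA A p q.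
  by have [_ ] := (hND q qA p).1 (conj pA (ex_intro _ 1 (conj h1 (esym (mulr1 p))))).
have uv : u * v = 1.
  apply: (mulfI (x:=q)); first exact/eqP.
  by rewrite mulr1 mulrA -pu -qv.
have unitM : forall a b, unitA A a -> unitA A b -> unitA A (a * b).
  move=> a b [aA [a' [a'A aa']]] [bA [b' [b'A bb']]]; split; first exact: hm.
  exists (a' * b'); split; first exact: hm.
  by rewrite mulrACA aa' bb' mulr1.
have uU : unitA A u by split=> //; exists v.
have vU : unitA A v by split=> //; exists u; rewrite mulrC.
have pnu : ~ unitA A p.
  move=> [_ [w [wA pw]]]; apply: qnu; split=> //; exists (u * w); split.
    exact: hm.
  by rewrite mulrA -pu.
have pprime : primeA A N p.
  split; last exact: hNN.
  split=> //; split=> //; split=> // e; apply: iff_trans (hND q qA e) _; apply: iff_trans (qirr e) _.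
  split; case=> [eu|[w [wU ->]]]; (try by left).
    by right; exists (v * w); split; [exact: unitM | rewrite mulrA -qv].
  by right; exists (u * w); split; [exact: unitM | rewrite mulrA -pu].
have px : dvdA A p x by apply: (dvdA_trans hm _ qx); exists v.
have pkA : forall k, p ^+ k \in A.
  by elim=> [|k IH]; rewrite ?expr0 // exprS; apply: hm.
have pinj : injective (fun k => p ^+ k).
  suff H : forall i j, (i < j)%N -> p ^+ i <> p ^+ j.
    move=> i j /= e; case: (ltngtP i j) => // ij; first by case: (H _ _ ij e).
    by case: (H _ _ ij (esym e)).
  move=> i j ij e; apply: pnu; split=> //.
  exists (p ^+ (j - i).-1); split=> //.
  rewrite -exprS prednK ?subn_gt0 //.
  apply: (mulfI (x:=p ^+ i)); first by rewrite expf_neq0 //; exact/eqP.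
  by rewrite -exprD subnKC ?(ltnW ij) // mulr1.
have bound : forall n, (forall k, (k <= n)%N -> dvdA A (p ^+ k) x) -> (n < size l)%N.
  move=> n hk.
  have := uniq_leq_size (s1 := map (fun k => p ^+ k) (iota 0 n.+1)) (s2 := l).
  rewrite size_map size_iota; apply.
    by rewrite map_inj_uniq // iota_uniq.
  move=> y /mapP [k]; rewrite mem_iota add0n => /andP [_ kn] ->.
  by apply: hl; split=> //; apply: hk.
have [n [[a [aA xa]] hn]] : exists n, dvdA A (p ^+ n) x /\ ~ dvdA A (p ^+ n.+1) x.
  apply: NNPP => H.
  have all : forall n, dvdA A (p ^+ n) x.
    elim=> [|n IH]; first by exists x; rewrite expr0 mul1r.
    apply: NNPP => Hn; apply: H; by exists n.
  by have := bound (size l) (fun k _ => all k); rewrite ltnn.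
exists p, n, a; split; first exact: pprime.
split.
  case: n xa hn => [|n] xa hn //; case: hn; rewrite expr1; exact: px.
split; first exact: aA.
split; first by move=> a0; apply: xn0; rewrite xa a0 mulr0.
split; first by rewrite mulrC.
move=> [b [bA ab]]; apply: hn; exists b; split; first exact: bA.
by rewrite exprSr -mulrA -ab -xa.
Qed.
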